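(* Let $t\geq 3$ be an integer and let $q$ be a prime power with $2t-1\leq q<4t-3$. Then there exists an MS$(q^{2t-1},t)$.
   Context: An $n\times n$ integer matrix $A=(a_{i,j})$ is a general magic square if the sums of the entries in each row, each column, the main diagonal $\{a_{i,i}\}$ and the back diagonal $\{a_{i,n-1-i}\}$ are all equal. For a positive integer $t$, a general magic square $M=(m_{i,j})$ is a general $t$-multimagic square if for every $e=1,\dots,t$ the entrywise power $M^{*e}=(m_{i,j}^{e})$ is a general magic square. A general $t$-multimagic square of order $n$ whose entries are $n^2$ consecutive integers is denoted MS$(n,t)$. *)

(* Defs.v *)
From HB Require Import structures.
From mathcomp Require Import all_boot all_order all_algebra.
Set Implicit Arguments. Unset Strict Implicit. Unset Printing Implicit Defensive.
Import Order.TTheory GRing.Theory Num.Theory.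
Local Open Scope ring_scope.

Definition general_magic (n : nat) (A : 'M[int]_n) : Prop :=
  exists s : int,
    (forall i : 'I_n, \sum_(j < n) A i j = s) /\
    (forall j : 'I_n, \sum_(i < n) A i j = s) /\
    \sum_(i < n) A i i = s /\
    \sum_(i < n) A i (rev_ord i) = s.

Definition general_multimagic (n t : nat) (M : 'M[int]_n) : Prop :=
  forall e : nat, (1 <= e <= t)%N -> general_magic (map_mx (fun x => x ^+ e) M).

Definition consecutive_entries (n : nat) (M : 'M[int]_n) : Prop :=
  exists a : int,
    (forall i j : 'I_n, a <= M i j < a + (n ^ 2)%:Z) /\
    (forall i j k l : 'I_n, M i j = M k l -> i = k /\ j = l).

Definition is_MS (n t : nat) (M : 'M[int]_n) : Prop :=
  general_multimagic t M /\ consecutive_entries M.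

Definition prime_power (q : nat) : Prop :=
  exists p k : nat, prime p /\ (0 < k)%N /\ q = (p ^ k)%N.

(* Main.v *)
Require Import Defs.
From HB Require Import structures.
From mathcomp Require Import all_boot all_order all_algebra all_field.
From mathcomp Require Import zify ring.
Set Warnings "-notation-overridden,-ambiguous-paths".
Set Implicit Arguments. Unset Strict Implicit. Unset Printing Implicit Defensive.
Import GRing.Theory.

Lemma digit_split q a b X Y : a < q -> b < q -> a + q * X = b + q * Y -> a = b /\ X = Y.
Proof.
move=> Ha Hb E.
have q0 : 0 < q by case: q Ha {Hb E}.
have E1 : (a + q * X) %% q = (b + q * Y) %% q by rewrite E.
rewrite ![_ + q * _]addnC ![q * _]mulnC !modnMDl !modn_small // in E1.
split => //; subst b.
by apply/eqP; rewrite -(eqn_pmul2l q0) -(eqn_add2l a) E.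
Qed.

Lemma sum_digits_rec q N (d : 'I_N.+1 -> nat) :
  \sum_(i < N.+1) q ^ i * d i = d ord0 + q * \sum_(i < N) q ^ i * d (lift ord0 i).
Proof.
rewrite big_ord_recl expn0 mul1n big_distrr /=; congr (_ + _).
by apply: eq_bigr => i _; rewrite /bump /= add1n expnS mulnA.
Qed.

Lemma digits_lt q N (d : 'I_N -> nat) : (forall i, d i < q) -> \sum_(i < N) q ^ i * d i < q ^ N.
Proof.
elim: N d => [|N IH] d Hd; first by rewrite big_ord0 expn0.
rewrite sum_digits_rec.
have := IH (fun i => d (lift ord0 i)) (fun i => Hd _). set X := \sum_(i < N) _.
move=> HX; have H0 := Hd ord0.
rewrite expnS; apply: (@leq_trans (q * X.+1)); first by rewrite mulnS; lia.
by rewrite leq_mul2l HX orbT.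
Qed.

Lemma digits_inj q N (d d' : 'I_N -> nat) : (forall i, d i < q) -> (forall i, d' i < q) ->
  \sum_(i < N) q ^ i * d i = \sum_(i < N) q ^ i * d' i -> forall i, d i = d' i.
Proof.
elim: N d d' => [|N IH] d d' Hd Hd' E i; first by case: i.
rewrite !sum_digits_rec in E.
have [E0 E1] := digit_split (Hd ord0) (Hd' ord0) E.
case: (unliftP ord0 i) => [j ->|->] //.
exact: (IH (fun i => d (lift ord0 i)) (fun i => d' (lift ord0 i))).
Qed.

Lemma geom_sum q N : 0 < q -> \sum_(i < N) q ^ i * q.-1 + 1 = q ^ N.
Proof.
move=> q0; elim: N => [|N IH]; first by rewrite big_ord0.
rewrite big_ord_recr /= -addnA [_ * _ + 1]addnC addnA IH expnS mulnC.
by rewrite -mulSn prednK.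
Qed.

Section Zeta.
Variable F : finFieldType.
Local Open Scope ring_scope.

Definition erk (a : F) : nat := enum_rank a.
Definition Hs : {set F} := [set a | (erk a < erk (1 - a)%R)%N].
Definition Fx : {set F} := [set a | 1 - a == a].
Definition sH := enum Hs.
Definition zn (a : F) : nat :=
  if a \in Hs then index a sH else if a \in Fx then #|Hs| else (#|F|.-1 - index (1 - a)%R sH)%N.

Lemma tauK (a : F) : 1 - (1 - a) = a.
Proof. by rewrite opprB addrC subrK. Qed.

Lemma erk_inj : injective erk.
Proof. by move=> a b /val_inj /enum_rank_inj. Qed.

Lemma Hs_tau a : a \in Hs -> (1 - a) \notin Hs.
Proof. rewrite !inE tauK => H; rewrite -leqNgt; exact: ltnW. Qed.

Lemma Hs_Fx a : a \in Hs -> a \notin Fx.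
Proof. by rewrite !inE => H; apply/eqP => E; rewrite E ltnn in H. Qed.

Lemma notHs a : a \notin Hs -> a \notin Fx -> (1 - a) \in Hs.
Proof.
rewrite !inE tauK -leqNgt leq_eqVlt => /orP [/eqP E|] // /negP []; apply/eqP.
by apply: erk_inj.
Qed.

Lemma Hs_Fx' a : a \in Fx -> a \notin Hs.
Proof. by apply: contraL; exact: Hs_Fx. Qed.

Lemma Fx_le1 : (#|Fx| <= 1)%N.
Proof.
case: (pickP (mem Fx)) => [a Ha|H]; last by rewrite (eq_card0 H).
rewrite -(cards1 a); apply: subset_leq_card; apply/subsetP => b Hb.
rewrite inE; move: Ha Hb; rewrite !inE => /eqP Ha /eqP Hb.
have E2 : a *+ 2 = b *+ 2 by rewrite !mulr2n -{1}Ha -{1}Hb !subrK.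
have H2 : (2%:R : F) != 0.
  apply/negP => /eqP H2.
  have : a *+ 2 = 1 by rewrite mulr2n -{1}Ha subrK.
  by rewrite -mulr_natr H2 mulr0 => /esym/eqP; rewrite oner_eq0.
have : (b - a) * 2%:R = 0 by rewrite mulr_natr mulrnBl E2 subrr.
by move/eqP; rewrite mulf_eq0 (negbTE H2) orbF subr_eq0.
Qed.

Lemma card_split : #|F| = (2 * #|Hs| + #|Fx|)%N.
Proof.
have -> : #|F| = #|[set: F]| by rewrite cardsT.
rewrite -(cardsID Hs [set: F]) setTI.
have -> : [set: F] :\: Hs = ((fun a => 1 - a) @: Hs) :|: Fx.
  apply/setP => a; rewrite in_setD in_setT andbT in_setU; apply/idP/idP.
    move=> Ha; case Fa: (a \in Fx); first by rewrite orbT.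
    apply/orP; left; apply/imsetP; exists (1 - a); last by rewrite tauK.
    by apply: notHs => //; rewrite Fa.
  case/orP => [/imsetP [b Hb ->]|Fa]; first exact: Hs_tau.
  by apply/negP => Ha; move: (Hs_Fx Ha); rewrite Fa.
have HU := cardsUI ((fun a => 1 - a) @: Hs) Fx.
have I0 : ((fun a => 1 - a) @: Hs) :&: Fx = set0.
  apply/setP => a; rewrite !inE; apply/negP => /andP [/imsetP [b Hb ->] Fb].
  by move: Fb (Hs_Fx Hb); rewrite tauK inE eq_sym => ->.
rewrite I0 cards0 addn0 card_imset in HU; last by move=> x y /= E; rewrite -(tauK x) E tauK.
by rewrite HU addnA addnn -mul2n.
Qed.

Lemma size_sH : size sH = #|Hs|.
Proof. by rewrite /sH cardE. Qed.

Lemma idx_lt a : a \in Hs -> (index a sH < #|Hs|)%N.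
Proof. by move=> H; rewrite -size_sH index_mem mem_enum. Qed.

Lemma Hs_le : (2 * #|Hs| + #|Fx| <= #|F|)%N.
Proof. by rewrite -card_split. Qed.

Lemma zn_lt a : (zn a < #|F|)%N.
Proof.
have Hf := Fx_le1; have Hc := Hs_le.
rewrite /zn; case: ifP => Ha.
  apply: (leq_trans (idx_lt Ha)); lia.
case: ifP => Fa.
  have : (0 < #|Fx|)%N by apply/card_gt0P; exists a.
  lia.
move: (idx_lt (notHs (negbT Ha) (negbT Fa))); set i := index _ _ => Hi.
have : (0 < #|F|)%N by apply/card_gt0P; exists a.
lia.
Qed.

Lemma zn_tau a : zn (1 - a) = (#|F|.-1 - zn a)%N.
Proof.
have Hc := card_split; have Hf := Fx_le1.
case Ha: (a \in Hs).
  have F1 : (1 - a \in Fx) = false.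
    by apply/negbTE; rewrite inE tauK; move: (Hs_Fx Ha); rewrite inE eq_sym.
  rewrite /zn (negbTE (Hs_tau Ha)) Ha F1 tauK; move: (idx_lt Ha); set i := index _ _ => Hi.
  have : (0 < #|F|)%N by apply/card_gt0P; exists a.
  lia.
case Fa: (a \in Fx).
  have E : 1 - a = a by move: Fa; rewrite inE => /eqP.
  rewrite E /zn Ha Fa.
  have : (0 < #|Fx|)%N by apply/card_gt0P; exists a.
  lia.
have H1 := notHs (negbT Ha) (negbT Fa).
rewrite /zn H1 Ha Fa; move: (idx_lt H1); set i := index _ _ => Hi.
lia.
Qed.

Lemma Fx1 a b : a \in Fx -> b \in Fx -> a = b.
Proof.
move=> Ha Hb; apply/eqP; apply: contraT => Hab.
have : (#|[set a; b]| <= #|Fx|)%N.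
  by apply: subset_leq_card; apply/subsetP => x; rewrite in_set2 => /orP [] /eqP ->.
by rewrite cards2 Hab; move: Fx_le1; lia.
Qed.

Lemma idx_inj a b : a \in Hs -> b \in Hs -> index a sH = index b sH -> a = b.
Proof.
move=> Ha Hb E; rewrite -(nth_index 0 (s := sH) (x := a)) ?mem_enum //.
by rewrite E nth_index // mem_enum.
Qed.

Lemma zn_inj : injective zn.
Proof.
have Hc := card_split; have Hf := Fx_le1.
have Z1 a : a \in Hs -> (zn a < #|Hs|)%N by move=> Ha; rewrite /zn Ha idx_lt.
have Z2 a : a \in Fx -> zn a = #|Hs| /\ #|F| = (2 * #|Hs|).+1.
  move=> Fa; rewrite /zn (negbTE (Hs_Fx' Fa)) Fa; split=> //.
  have : (0 < #|Fx|)%N by apply/card_gt0P; exists a.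
  lia.
have Z3 a : a \notin Hs -> a \notin Fx -> (#|Hs| <= zn a)%N /\ (#|Fx| = 1 -> #|Hs| < zn a)%N.
  move=> Ha Fa; have H1 := notHs Ha Fa; rewrite /zn (negbTE Ha) (negbTE Fa).
  move: (idx_lt H1); set i := index _ _ => Hi; lia.
move=> a b E.
case Ha: (a \in Hs); case Hb: (b \in Hs).
- by apply: idx_inj => //; move: E; rewrite /zn Ha Hb.
- have := Z1 a Ha; rewrite E; case Fb: (b \in Fx).
    by case: (Z2 b Fb) => -> _; rewrite ltnn.
  by case: (Z3 b (negbT Hb) (negbT Fb)) => H _; rewrite ltnNge H.
- have := Z1 b Hb; rewrite -E; case Fa: (a \in Fx).
    by case: (Z2 a Fa) => -> _; rewrite ltnn.
  by case: (Z3 a (negbT Ha) (negbT Fa)) => H _; rewrite ltnNge H.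
case Fa: (a \in Fx); case Fb: (b \in Fx).
- exact: Fx1.
- case: (Z2 a Fa) => Ea _; case: (Z3 b (negbT Hb) (negbT Fb)) => _ H.
  have F1 : #|Fx| = 1.
    have : (0 < #|Fx|)%N by apply/card_gt0P; exists a.
    lia.
  by move: (H F1); rewrite -E Ea ltnn.
- case: (Z2 b Fb) => Eb _; case: (Z3 a (negbT Ha) (negbT Fa)) => _ H.
  have F1 : #|Fx| = 1.
    have : (0 < #|Fx|)%N by apply/card_gt0P; exists b.
    lia.
  by move: (H F1); rewrite E Eb ltnn.
have H1 := notHs (negbT Ha) (negbT Fa); have H2 := notHs (negbT Hb) (negbT Fb).
have : zn (1 - a) = zn (1 - b) by rewrite !zn_tau E.
rewrite /zn H1 H2 => /(idx_inj H1 H2) E2.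
by rewrite -(tauK a) E2 tauK.
Qed.

End Zeta.
Local Open Scope ring_scope.

Lemma expr_prod (R : pzRingType) (x : R) e : x ^+ e = \prod_(i < e) x.
Proof. by elim: e => [|e IH]; rewrite ?big_ord0 ?expr0 // big_ord_recl exprS IH. Qed.

Section Mag.
Variables (F : finFieldType) (m : nat).
Local Open Scope ring_scope.
Local Notation N := #|F|.

Local Notation Vt := {ffun 'I_m -> F}.
Local Notation Kt := ('I_m * bool)%type.
Local Notation Wt := {ffun Kt -> F}.

Definition Psin (x : Vt) : nat := \sum_(j < m) N ^ j * zn (x j).
Lemma Psi_lt x : (Psin x < N ^ m)%N.
Proof. exact: digits_lt (fun j => zn_lt (x j)). Qed.
Definition Psi x : 'I_(N ^ m) := Ordinal (Psi_lt x).

Lemma Psi_inj : injective Psi.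
Proof.
move=> x y /(congr1 val) /= E; apply/ffunP => j; apply: zn_inj.
exact: (digits_inj (fun j => zn_lt (x j)) (fun j => zn_lt (y j)) E j).
Qed.

Lemma Psi_bij : bijective Psi.
Proof. apply: (inj_card_bij Psi_inj). rewrite card_ord card_ffun card_ord. done. Qed.

Definition negv (x : Vt) : Vt := [ffun j => 1 - x j].

Lemma Psi_rev x : rev_ord (Psi x) = Psi (negv x).
Proof.
apply: val_inj => /=.
have N0 : (0 < N)%N by apply/card_gt0P; exists 0.
have H : (Psin (negv x) + Psin x + 1 = N ^ m)%N.
  rewrite /Psin -big_split /= -(geom_sum m N0); congr (_ + _)%N.
  apply: eq_bigr => j _; rewrite ffunE zn_tau -mulnDr subnK //.
  by have := zn_lt (x j); case: (N) => //= n; rewrite ltnS.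
move: H; set a := Psin _; set b := Psin _ => <-; lia.
Qed.

Definition En (w : Wt) : nat := \sum_(i < #|{: Kt}|) N ^ i * zn (w (enum_val i)).
Lemma En_lt w : (En w < N ^ #|{: Kt}|)%N.
Proof. exact: digits_lt (fun j => zn_lt _). Qed.
Lemma En_inj : injective En.
Proof.
move=> w w' E; apply/ffunP => k; apply: zn_inj.
have := digits_inj (fun j => zn_lt _) (fun j => zn_lt _) E (enum_rank k).
by rewrite enum_rankK.
Qed.

Definition Ev (w : Wt) : int := (En w)%:Z.
Definition hE (w : Wt) (i : 'I_#|{: Kt}|) : int := ((N ^ i * zn (w (enum_val i)))%N)%:Z.

Lemma E_pow w e : Ev w ^+ e = \sum_(f : {ffun 'I_e -> 'I_#|{: Kt}|}) \prod_(l < e) hE w (f l).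
Proof.
rewrite /Ev /En (big_morph Posz PoszD (erefl _)) expr_prod.
exact: (bigA_distr_bigA (fun (l : 'I_e) (i : 'I_#|{: Kt}|) => hE w i)).
Qed.

Definition good t (B : Vt -> Wt) :=
  forall S : {set Kt}, (#|S| <= t)%N -> forall z : Wt, exists y, forall k, k \in S -> B y k = z k.

Lemma offset t (B : Vt -> Wt) : (forall x y, B (x + y) = B x + B y) -> good t B ->
  forall e, (e <= t)%N -> forall c : Wt, \sum_y Ev (B y + c) ^+ e = \sum_y Ev (B y) ^+ e.
Proof.
move=> Badd Bg e Het c.
under eq_bigr do rewrite E_pow. under [RHS]eq_bigr do rewrite E_pow.
rewrite exchange_big [RHS]exchange_big; apply: eq_bigr => f _.
set S := [set enum_val (f l) | l in [set: 'I_e]].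
have HS : (#|S| <= t)%N.
  by apply: leq_trans (leq_imset_card _ _) _; rewrite cardsT card_ord.
have [y0 Hy0] := Bg S HS c.
rewrite [RHS](reindex_inj (addIr y0)) /=.
apply: eq_bigr => y _; apply: eq_bigr => l _.
rewrite /hE Badd !ffunE Hy0 //; apply: imset_f; exact: in_setT.
Qed.

End Mag.

Section Cons.
Variables (F : finFieldType) (t : nat).
Hypothesis t1 : (1 <= t)%N.
Hypothesis Hq : (2 * t - 1 <= #|F|)%N.
Local Notation m := (2 * t - 1)%N.
Local Notation N := #|F|.
Local Open Scope ring_scope.
Local Notation Vt := {ffun 'I_m -> F}.
Local Notation Kt := ('I_m * bool)%type.
Local Notation Wt := {ffun Kt -> F}.

Definition pt (k : 'I_m) : F := enum_val (widen_ord Hq k).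
Lemma pt_inj : injective pt.
Proof. by move=> a b /enum_val_inj /(congr1 val) /= E; apply: val_inj. Qed.

Definition co (x : Vt) (j : nat) : F := oapp x 0 (insub j : option 'I_m).
Definition gp (x : Vt) : {poly F} := \poly_(j < t.-1) co x j.
Definition fp (x : Vt) : {poly F} := \poly_(j < t) co x (j + t.-1).

Lemma coD x y j : co (x + y) j = co x j + co y j.
Proof. by rewrite /co; case: insubP => [k _ _|_] /=; rewrite ?ffunE ?addr0. Qed.
Lemma coN x j : co (- x) j = - co x j.
Proof. by rewrite /co; case: insubP => [k _ _|_] /=; rewrite ?ffunE ?oppr0. Qed.
Lemma co_ord x (k : 'I_m) : co x k = x k.
Proof. by rewrite /co valK. Qed.

Lemma gpD x y : gp (x + y) = gp x + gp y.
Proof. by apply/polyP => j; rewrite coefD !coef_poly; case: ifP; rewrite ?coD ?addr0. Qed.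
Lemma fpD x y : fp (x + y) = fp x + fp y.
Proof. by apply/polyP => j; rewrite coefD !coef_poly; case: ifP; rewrite ?coD ?addr0. Qed.
Lemma gp_size x : (size (gp x) <= t.-1)%N.
Proof. exact: size_poly. Qed.
Lemma fp_size x : (size (fp x) <= t)%N.
Proof. exact: size_poly. Qed.

Definition mkV (g f : {poly F}) : Vt :=
  [ffun k : 'I_m => if (k < t.-1)%N then g`_k else f`_(k - t.-1)].

Lemma gp_mk (g f : {poly F}) : (size g <= t.-1)%N -> gp (mkV g f) = g.
Proof.
move=> Hg; apply/polyP => j; rewrite coef_poly; case: ifP => Hj.
  rewrite /co; case: insubP => [k _ Ek|Hk] /=.
    by rewrite ffunE Ek Hj.
  by exfalso; move/negP: Hk; apply; lia.
by rewrite nth_default //; apply: leq_trans Hg _; rewrite leqNgt Hj.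
Qed.

Lemma fp_mk (g f : {poly F}) : (size f <= t)%N -> fp (mkV g f) = f.
Proof.
move=> Hf; apply/polyP => j; rewrite coef_poly; case: ifP => Hj.
  rewrite /co; case: insubP => [k _ Ek|Hk] /=.
    rewrite ffunE Ek.
    have -> : (j + t.-1 < t.-1)%N = false by lia.
    by rewrite addnK.
  by exfalso; move/negP: Hk; apply; lia.
by rewrite nth_default //; apply: leq_trans Hf _; rewrite leqNgt Hj.
Qed.

Lemma V_eq0 x : gp x = 0 -> fp x = 0 -> x = 0.
Proof.
move=> Hg Hf; apply/ffunP => k; rewrite !ffunE.
case: (ltnP k t.-1) => Hk.
  by move: (congr1 (fun p : {poly F} => p`_k) Hg); rewrite coef_poly Hk co_ord coef0.
move: (congr1 (fun p : {poly F} => p`_(k - t.-1)) Hf); rewrite coef_poly.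
have -> : (k - t.-1 < t)%N by have := ltn_ord k; lia.
by rewrite subnK // co_ord coef0.
Qed.

Lemma interp_seq (h : 'I_m -> F) (s : seq 'I_m) : uniq s ->
  exists p : {poly F}, (size p <= size s)%N /\ forall k, k \in s -> p.[pt k] = h k.
Proof.
elim: s => [|i s IH] /=; first by move=> _; exists 0; rewrite size_poly0.
case/andP => his /IH [p [Hs Hp]].
pose Q := \prod_(a <- map pt s) ('X - a%:P).
have HQ : Q.[pt i] != 0.
  by rewrite -rootE root_prod_XsubC mem_map //; exact: pt_inj.
exists (p + ((h i - p.[pt i]) / Q.[pt i]) *: Q); split.
  apply: leq_trans (size_add _ _) _; rewrite geq_max; apply/andP; split.
    exact: leq_trans Hs (leqnSn _).
  by apply: leq_trans (size_scale_leq _ _) _; rewrite size_prod_XsubC size_map.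
move=> k; rewrite inE => /orP [/eqP ->|Hk].
  by rewrite hornerD hornerZ divfK // addrC subrK.
have : root Q (pt k) by rewrite root_prod_XsubC map_f.
by rewrite hornerD hornerZ => /eqP ->; rewrite mulr0 addr0 Hp.
Qed.

Lemma interp (h : 'I_m -> F) (P : {set 'I_m}) n : (#|P| <= n)%N ->
  exists p : {poly F}, (size p <= n)%N /\ forall k, k \in P -> p.[pt k] = h k.
Proof.
move=> Hn; have [p [Hs Hp]] := interp_seq h (enum_uniq (mem P)).
exists p; split; first by apply: leq_trans Hs _; rewrite -cardE.
by move=> k Hk; apply: Hp; rewrite mem_enum.
Qed.


Lemma exists_c0 : exists c0 : F, forall a : F, a ^+ 2 + a != c0.
Proof.
pose f := fun a : F => a ^+ 2 + a.
have Hni : ~ {in [set: F] &, injective f}.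
  move=> Hi; have : (0 : F) = -1 by apply: Hi; rewrite ?inE // /f; rewrite expr0n /= addr0 sqrrN expr1n subrr.
  move/eqP; rewrite eq_sym oppr_eq0 oner_eq0 //.
have : (#|f @: [set: F]| < #|[set: F]|)%N.
  rewrite ltn_neqAle leq_imset_card andbT; apply/negP => /imset_injP; exact: Hni.
move=> Hlt; case: (pickP (fun c => c \notin f @: [set: F])) => [c Hc|H].
  exists c => a; apply/eqP => E; move/negP: Hc; apply; rewrite -E; apply: imset_f; exact: in_setT.
exfalso; suff : (#|[set: F]| <= #|f @: [set: F]|)%N by rewrite leqNgt Hlt.
apply: subset_leq_card; apply/subsetP => c _; move: (H c) => /= /negbFE; done.
Qed.

Variable c0 : F.
Hypothesis c0P : forall a : F, a ^+ 2 + a != c0.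

Definition rr : {poly F} := 'X^2 + 'X - c0%:P.
Lemma rr_nz a : rr.[a] != 0.
Proof. by rewrite /rr !hornerE subr_eq0 c0P. Qed.
Lemma size_rr : size rr = 3%N.
Proof.
rewrite /rr -addrA size_addl ?size_polyXn // size_XsubC //.
Qed.
Lemma rr_neq0 : rr != 0.
Proof. by rewrite -size_poly_eq0 size_rr. Qed.

Definition rk : {poly F} := rr ^+ t./2.
Lemma size_rk : size rk = (t./2.*2).+1.
Proof.
have H := size_exp rr t./2; rewrite size_rr /= mul2n in H.
by rewrite -H prednK // size_poly_gt0 expf_neq0 // rr_neq0.
Qed.
Lemma rk_nz a : rk.[a] != 0.
Proof. by rewrite /rk horner_exp expf_neq0 // rr_nz. Qed.

Definition vw : {poly F} := if odd t then 1 else rk.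
Definition uw : {poly F} := if odd t then rk else 1.
Lemma vw_nz a : vw.[a] != 0.
Proof. by rewrite /vw; case: ifP => _; rewrite ?hornerC ?oner_eq0 ?rk_nz. Qed.
Lemma uw_nz a : uw.[a] != 0.
Proof. by rewrite /uw; case: ifP => _; rewrite ?hornerC ?oner_eq0 ?rk_nz. Qed.

Lemma sep (g h : {poly F}) : (size g <= t.-1)%N -> (size h <= t)%N ->
  (forall k, vw.[pt k] * g.[pt k] = uw.[pt k] * h.[pt k]) -> g = 0 /\ h = 0.
Proof.
move=> Hg Hh Hk.
have Ht := odd_double_half t.
have E : vw * g = uw * h.
  apply/eqP; rewrite -subr_eq0; apply/eqP.
  apply: (roots_geq_poly_eq0 (rs := map pt (enum 'I_m))).
  - by apply/allP => a /mapP [k _ ->]; rewrite rootE !hornerE Hk subrr.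
  - by rewrite map_inj_uniq ?enum_uniq //; exact: pt_inj.
  rewrite size_map -cardT card_ord.
  apply: leq_trans (size_add _ _) _; rewrite size_opp geq_max; apply/andP; split.
    apply: leq_trans (size_mul_leq _ _) _; rewrite /vw; case: ifP => Ho.
      rewrite size_poly1 add1n /=; set sg := size g in Hg *; lia.
    rewrite size_rk; rewrite Ho /= in Ht; set sg := size g in Hg *; lia.
  apply: leq_trans (size_mul_leq _ _) _; rewrite /uw; case: ifP => Ho.
    rewrite size_rk; rewrite Ho /= in Ht; set sh := size h in Hh *; lia.
  rewrite size_poly1 add1n /=; set sh := size h in Hh *; lia.
have rk0 : rk != 0 by rewrite /rk expf_neq0 // rr_neq0.
move: E; rewrite /vw /uw; case: ifP => Ho; rewrite ?mul1r ?mulr1 => E.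
  have h0 : h = 0.
    apply/eqP; apply: contraT => hn0; move: Hg; rewrite E size_mul //.
    rewrite size_rk; rewrite Ho /= in Ht; have := size_poly_gt0 h; rewrite hn0.
    set sh := size h; lia.
  by split => //; rewrite E h0 mulr0.
have g0 : g = 0.
  apply/eqP; apply: contraT => gn0; move: Hh; rewrite -E size_mul //.
  rewrite size_rk; rewrite Ho /= in Ht; have := size_poly_gt0 g; rewrite gn0.
  set sg := size g; lia.
by split => //; rewrite -E g0 mulr0.
Qed.


Definition Gv (x : Vt) k := vw.[pt k] * (gp x).[pt k].
Definition Fv (x : Vt) k := uw.[pt k] * (fp x).[pt k].
Definition Tm (al be ga de : F) (x : Vt) : Wt :=
  [ffun kb : Kt => if kb.2 then ga * Gv x kb.1 + de * Fv x kb.1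
                  else al * Gv x kb.1 + be * Fv x kb.1].

Lemma TmD al be ga de x y : Tm al be ga de (x + y) = Tm al be ga de x + Tm al be ga de y.
Proof.
apply/ffunP => kb; rewrite !ffunE /Gv /Fv gpD fpD !hornerD.
by case: ifP => _; ring.
Qed.

Lemma Tm_good al be ga de : be != 0 -> de != 0 -> al * de - be * ga != 0 ->
  good t (Tm al be ga de).
Proof.
move=> Hbe Hde HD S HS z.
pose Stop : {set 'I_m} := [set k | (k, false) \in S].
pose Sbot : {set 'I_m} := [set k | (k, true) \in S].
pose P := Stop :|: Sbot.
pose Bo := Stop :&: Sbot.
pose D := al * de - be * ga.
pose Gt k := if k \in Bo then (de * z (k, false) - be * z (k, true)) / D else 0.
pose Ft k := if k \in Bo then (al * z (k, true) - ga * z (k, false)) / D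
             else if k \in Stop then z (k, false) / be else z (k, true) / de.
have PS : (#|P| <= #|[set kb.1 | kb in S]|)%N.
  apply: subset_leq_card; apply/subsetP => k; rewrite !inE => /orP [] H;
  by apply/imsetP; eexists; first exact: H.
have HPt : (#|P| <= t)%N by apply: leq_trans PS (leq_trans (leq_imset_card _ _) HS).
have [f [Hfs Hf]] := interp (fun k => Ft k / uw.[pt k]) HPt.
have [g [Hgs Hg]] : exists g : {poly F}, (size g <= t.-1)%N /\
    forall k, k \in P -> vw.[pt k] * g.[pt k] = Gt k.
  case: (pickP (mem Bo)) => [k0 Hk0|B0].
    have Hlt : (#|[set kb.1 | kb in S]| < #|S|)%N.
      rewrite ltn_neqAle leq_imset_card andbT; apply/negP => /imset_injP Hi.
      move: Hk0; rewrite /= !inE => /andP [H1 H2].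
      by move: (Hi _ _ H1 H2 erefl).
    have HPt1 : (#|P| <= t.-1)%N.
      move: PS Hlt HS; set a := #|P|; set b := #|_|; set c := #|S|; lia.
    have [g [Hgs Hg]] := interp (fun k => Gt k / vw.[pt k]) HPt1.
    exists g; split => // k Hk; rewrite Hg // mulrC divfK //; exact: vw_nz.
  exists 0; split; first by rewrite size_poly0.
  move=> k _; rewrite /Gt; have -> : (k \in Bo) = false by apply: B0.
  by rewrite horner0 mulr0.
exists (mkV g f) => -[k b] Hkb.
have HkP : k \in P by rewrite !inE; case: b Hkb => ->; rewrite ?orbT.
have EG : Gv (mkV g f) k = Gt k by rewrite /Gv gp_mk // Hg.
have EF : Fv (mkV g f) k = Ft k.
  by rewrite /Fv fp_mk // Hf // mulrC divfK //; exact: uw_nz.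
rewrite ffunE /= EG EF /Gt /Ft.
case Bk: (k \in Bo).
  case: b Hkb => _ /=; rewrite /D; field; exact: HD.
have [Bt Bb] : ((k \in Stop) = (b == false)) /\ ((k \in Sbot) = (b == true)).
  move: Bk; rewrite !inE; case: b Hkb => -> /=; first by case: ((k, false) \in S).
  by case: ((k, true) \in S).
case: b Hkb Bt Bb => _ /= -> //=; rewrite mulr0 add0r mulrC divfK //.
Qed.

Lemma good_ext t' (B B' : Vt -> Wt) : (forall x, B x = B' x) -> good t' B' -> good t' B.
Proof. by move=> E G S HS z; have [y Hy] := G S HS z; exists y => k Hk; rewrite E Hy. Qed.


Lemma TmB al be ga de x y : Tm al be ga de (x - y) = Tm al be ga de x - Tm al be ga de y.
Proof. by apply/eqP; rewrite eq_sym subr_eq -TmD subrK. Qed.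

Variables bb bb2 gg : F.
Hypothesis Hbb : bb \notin [:: 0; 1; -1].
Hypothesis Hbb2 : bb2 \notin [:: 0; 1; -1; bb].
Hypothesis Hgg : gg \notin [:: 0; (1 + bb2) / (1 + bb); - ((1 - bb2) / (1 - bb))].

Definition A1 := Tm 1 1 0 1.
Definition A2 := Tm 0 bb gg bb2.

Lemma pm_neq0 (a : F) : a != 1 -> a != -1 -> (1 + a != 0) /\ (1 - a != 0).
Proof.
move=> H1 H2; split.
  by rewrite addrC addr_eq0.
by rewrite subr_eq0 eq_sym.
Qed.

Lemma params : [/\ bb != 0, bb2 != 0, gg != 0, bb != bb2 &
  [/\ 1 + bb != 0, 1 - bb != 0, 1 + bb2 != 0 & 1 - bb2 != 0]] /\
  gg != (1 + bb2) / (1 + bb) /\ gg != - ((1 - bb2) / (1 - bb)).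
Proof.
move: Hbb Hbb2 Hgg; rewrite !inE !negb_or.
case/and3P => b0 b1 bm1; case/and4P => c0' c1 cm1 cb; case/and3P => g0 g1 g2.
have [p1 m1] := pm_neq0 b1 bm1; have [p2 m2] := pm_neq0 c1 cm1.
by split => //; split => //; rewrite eq_sym.
Qed.

Lemma A1_good : good t A1.
Proof. by apply: Tm_good; rewrite ?oner_eq0 // mulr1 mulr0 subr0 oner_eq0. Qed.

Lemma A2_good : good t A2.
Proof.
have [[b0 c0' g0 _ _] _] := params.
by apply: Tm_good => //; rewrite mul0r sub0r oppr_eq0 mulf_neq0.
Qed.

Lemma Aplus_good : good t (fun x => A1 x + A2 x).
Proof.
have [[b0 c0' g0 _ [p1 m1 p2 m2]] [G1 G2]] := params.
apply: (good_ext (B' := Tm 1 (1 + bb) gg (1 + bb2))).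
  by move=> x; apply/ffunP => kb; rewrite !ffunE; case: ifP => _; ring.
apply: Tm_good => //; apply: contra G1 => /eqP E; apply/eqP; apply/eqP; rewrite -subr_eq0.
have -> : gg - (1 + bb2) / (1 + bb) = - (1 * (1 + bb2) - (1 + bb) * gg) / (1 + bb) by field.
by rewrite E oppr0 mul0r.
Qed.

Lemma Aminus_good : good t (fun x => A1 x - A2 x).
Proof.
have [[b0 c0' g0 _ [p1 m1 p2 m2]] [G1 G2]] := params.
apply: (good_ext (B' := Tm 1 (1 - bb) (- gg) (1 - bb2))).
  by move=> x; apply/ffunP => kb; rewrite !ffunE; case: ifP => _; ring.
apply: Tm_good => //; apply: contra G2 => /eqP E; apply/eqP; apply/eqP; rewrite -subr_eq0.
have -> : gg - - ((1 - bb2) / (1 - bb)) = (1 * (1 - bb2) - (1 - bb) * - gg) / (1 - bb) by field.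
by rewrite E mul0r.
Qed.

Lemma A_inj0 x y : A1 x + A2 y = 0 -> x = 0 /\ y = 0.
Proof.
have [[b0 c0' g0 bneq _] _] := params.
move=> E.
have Et k : Fv x k + (gg * Gv y k + bb2 * Fv y k) = 0.
  by move: (congr1 (fun w : Wt => w (k, true)) E); rewrite !ffunE /= mul0r add0r mul1r.
have Ef k : Gv x k + Fv x k + bb * Fv y k = 0.
  by move: (congr1 (fun w : Wt => w (k, false)) E); rewrite !ffunE /= mul0r add0r !mul1r.
have [gy0 fxy0] : gg *: gp y = 0 /\ - (fp x + bb2 *: fp y) = 0.
  apply: sep.
  - exact: leq_trans (size_scale_leq _ _) (gp_size _).
  - rewrite size_opp; apply: leq_trans (size_add _ _) _; rewrite geq_max fp_size /=.
    exact: leq_trans (size_scale_leq _ _) (fp_size _).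
  move=> k; apply/eqP; rewrite -subr_eq0; apply/eqP; rewrite -[RHS](Et k) /Gv /Fv.
  by rewrite hornerZ hornerN hornerD hornerZ; ring.
have [gx0 fxy1] : gp x = 0 /\ - (fp x + bb *: fp y) = 0.
  apply: sep.
  - exact: gp_size.
  - rewrite size_opp; apply: leq_trans (size_add _ _) _; rewrite geq_max fp_size /=.
    exact: leq_trans (size_scale_leq _ _) (fp_size _).
  move=> k; apply/eqP; rewrite -subr_eq0; apply/eqP; rewrite -[RHS](Ef k) /Gv /Fv.
  by rewrite hornerN hornerD hornerZ; ring.
have gy : gp y = 0 by move/eqP: gy0; rewrite scaler_eq0 (negbTE g0) => /eqP.
have fy : fp y = 0.
  have : (bb - bb2) *: fp y = 0.
    move/eqP: fxy0; move/eqP: fxy1; rewrite !oppr_eq0 => /eqP A /eqP B.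
    have -> : (bb - bb2) *: fp y = (fp x + bb *: fp y) - (fp x + bb2 *: fp y).
      by rewrite opprD addrACA subrr add0r scalerBl.
    by rewrite A B subrr.
  by move/eqP; rewrite scaler_eq0 subr_eq0 (negbTE bneq) /= => /eqP.
have fx : fp x = 0.
  by move/eqP: fxy1; rewrite oppr_eq0 fy scaler0 addr0 => /eqP.
by split; apply: V_eq0.
Qed.

Lemma A_inj x y x' y' : A1 x + A2 y = A1 x' + A2 y' -> x = x' /\ y = y'.
Proof.
move=> E.
have : A1 (x - x') + A2 (y - y') = 0.
  by rewrite /A1 /A2 !TmB -/A1 -/A2 addrACA -opprD E subrr.
by case/A_inj0 => /eqP; rewrite subr_eq0 => /eqP -> /eqP; rewrite subr_eq0 => /eqP ->.
Qed.


Lemma sum_constT (T : finType) (c : int) : \sum_(x : T) c = c *+ #|T|.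
Proof. by rewrite sumr_const. Qed.

Lemma A1D x y : A1 (x + y) = A1 x + A1 y. Proof. exact: TmD. Qed.
Lemma A2D x y : A2 (x + y) = A2 x + A2 y. Proof. exact: TmD. Qed.
Lemma A2B x y : A2 (x - y) = A2 x - A2 y. Proof. exact: TmB. Qed.

Variable Phi : 'I_(N ^ m) -> Vt.
Hypothesis PsiK : cancel (@Psi F m) Phi.
Hypothesis PhiK : cancel Phi (@Psi F m).

Lemma sum_Phi (G : Vt -> int) : \sum_(i < N ^ m) G (Phi i) = \sum_(x : Vt) G x.
Proof.
rewrite (reindex (@Psi F m)) /=; last by apply: onW_bij; exists Phi.
by apply: eq_bigr => x _; rewrite PsiK.
Qed.

Definition Mx : 'M[int]_(N ^ m) := \matrix_(i, j) Ev (A1 (Phi i) + A2 (Phi j)).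

Lemma magic e : (1 <= e <= t)%N -> general_magic (map_mx (fun x => x ^+ e) Mx).
Proof.
case/andP => _ He.
pose R := \sum_(y : Vt) Ev (A2 y) ^+ e.
pose C := \sum_(x : Vt) Ev (A1 x) ^+ e.
pose D := \sum_(x : Vt) Ev (A1 x + A2 x) ^+ e.
pose Bk := \sum_(x : Vt) Ev (A1 x - A2 x) ^+ e.
pose T := \sum_(x : Vt) \sum_(y : Vt) Ev (A1 x + A2 y) ^+ e.
have HR x : \sum_(y : Vt) Ev (A1 x + A2 y) ^+ e = R.
  under eq_bigr do rewrite addrC.
  exact: (offset A2D A2_good He).
have HC y : \sum_(x : Vt) Ev (A1 x + A2 y) ^+ e = C.
  exact: (offset A1D A1_good He).
have HD c : \sum_(x : Vt) Ev (A1 x + A2 (x + c)) ^+ e = D.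
  under eq_bigr do rewrite A2D addrA.
  apply: (offset (B := fun x => A1 x + A2 x) _ Aplus_good He).
  by move=> x y; rewrite A1D A2D addrACA.
have HB c : \sum_(x : Vt) Ev (A1 x + A2 (c - x)) ^+ e = Bk.
  under eq_bigr do rewrite A2B [A2 c + _]addrC addrA.
  apply: (offset (B := fun x => A1 x - A2 x) _ Aminus_good He).
  by move=> x y; rewrite A1D A2D opprD addrACA.
have TR : T = R *+ #|Vt|.
  by rewrite /T (eq_bigr (fun _ => R)) ?sum_constT.
have TC : T = C *+ #|Vt|.
  by rewrite /T exchange_big (eq_bigr (fun _ => C)) ?sum_constT.
have TD : T = D *+ #|Vt|.
  rewrite /T (eq_bigr (fun x => \sum_(c : Vt) Ev (A1 x + A2 (x + c)) ^+ e)).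
    by rewrite exchange_big (eq_bigr (fun _ => D)) ?sum_constT.
  by move=> x _; rewrite (reindex_inj (addrI x)).
have TB : T = Bk *+ #|Vt|.
  rewrite /T (eq_bigr (fun x => \sum_(c : Vt) Ev (A1 x + A2 (c - x)) ^+ e)).
    by rewrite exchange_big (eq_bigr (fun _ => Bk)) ?sum_constT.
  by move=> x _; rewrite (reindex_inj (addIr (- x))).
have V0 : (0 < #|Vt|)%N by apply/card_gt0P; exists 0.
have CR : C = R by apply: (Num.Theory.pmulrnI V0); rewrite -TC -TR.
have DR : D = R by apply: (Num.Theory.pmulrnI V0); rewrite -TD -TR.
have BR : Bk = R by apply: (Num.Theory.pmulrnI V0); rewrite -TB -TR.
exists R; split; [|split; [|split]].
- move=> i; rewrite -(HR (Phi i)) -sum_Phi.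
  by apply: eq_bigr => j _; rewrite !mxE.
- move=> j; rewrite -CR -(HC (Phi j)) -(sum_Phi (fun x => Ev (A1 x + A2 (Phi j)) ^+ e)).
  by apply: eq_bigr => i _; rewrite !mxE.
- rewrite -DR /D -sum_Phi.
  by apply: eq_bigr => i _; rewrite !mxE.
- rewrite -BR -(HB [ffun => 1]) -sum_Phi.
  apply: eq_bigr => i _; rewrite !mxE.
  have -> : Phi (rev_ord i) = negv (Phi i).
    by rewrite -{1}(PhiK i) Psi_rev PsiK.
  congr (Ev (_ + A2 _) ^+ e); apply/ffunP => j; rewrite !ffunE.
  done.
Qed.

Lemma consec : consecutive_entries Mx.
Proof.
exists 0; split.
  move=> i j; rewrite mxE /Ev add0r; apply/andP; split => //.
  rewrite ltz_nat; apply: leq_trans (En_lt _) _.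
  by rewrite card_prod card_ord card_bool -expnM mulnC.
move=> i j k l; rewrite !mxE /Ev => /eqP; rewrite eqz_nat => /eqP /En_inj.
by case/A_inj => /(can_inj PhiK) -> /(can_inj PhiK) ->.
Qed.

Lemma main_MS : exists M : 'M[int]_(N ^ m), is_MS t M.
Proof. exists Mx; split; [exact: magic | exact: consec]. Qed.

End Cons.

Lemma exists_notin (F : finType) (s : seq F) : (size s < #|F|)%N -> exists a, a \notin s.
Proof.
move=> Hs; case: (pickP (fun a => a \notin s)) => [a Ha|H]; first by exists a.
exfalso; suff : (#|F| <= size s)%N by rewrite leqNgt Hs.
apply: leq_trans (card_size s); apply: subset_leq_card; apply/subsetP => a _.
by move: (H a) => /= /negbFE.
Qed.

Theorem corollary4p1 (t q : nat) :
  (3 <= t)%N -> prime_power q -> (2 * t - 1 <= q)%N -> (q < 4 * t - 3)%N ->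
  exists M : 'M[int]_(q ^ (2 * t - 1)), is_MS t M.
Proof.
move=> t3 [p [k [pr [k0 ->]]]] Hq _.
case: (pPrimePowerField pr k0) => F _ HF.
rewrite -HF in Hq *.
have t1 : (0 < t)%N by lia.
have F4 : (4 < #|F|)%N by lia.
have [c0 c0P] := exists_c0 F.
have [bb Hbb] : exists bb : F, bb \notin [:: 0; 1; -1] by apply: exists_notin; apply: leq_trans F4.
have [bb2 Hbb2] : exists bb2 : F, bb2 \notin [:: 0; 1; -1; bb] by apply: exists_notin; apply: leq_trans F4.
have [gg Hgg] : exists gg : F, gg \notin [:: 0; (1 + bb2) / (1 + bb); - ((1 - bb2) / (1 - bb))].
  by apply: exists_notin; apply: leq_trans F4.
case: (Psi_bij F (2 * t - 1)) => Phi PsiK PhiK.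
exact: (main_MS t1 Hq c0P Hbb Hbb2 Hgg PsiK PhiK).
Qed.
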